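(* Let $n\in\mathbb{N}$, $\hbar\in{]0,\infty[}$, $\mu\in\mathbb{R}$, $k,\ell\in\mathbb{N}_0$ and $g\in\mathscr{P}^{\ell,\ell}(\mathbb{C}^{1+n})$. Then $\mathcal{J}^kg-\hbar^k\big(\tfrac{\mu}{\hbar}-\ell\big)_{\downarrow,k}\,g\in\langle\mathcal{J}-\mu\rangle$, where $\mathcal{J}^kg$ is the pointwise product and $\langle\mathcal{J}-\mu\rangle$ is the $^*$-ideal of $(\bigoplus_m\mathscr{P}^{m,m}(\mathbb{C}^{1+n}),\star_\hbar)$ generated by $\mathcal{J}-\mu\mathbb{1}$.
   Context: $\mathscr{P}^{k,\ell}(\mathbb{C}^{1+n})$ is the span of monomials $z^K\overline{z}^L$ with $K,L\in\mathbb{N}_0^{1+n}$, $|K|=k$, $|L|=\ell$. Wick product: $f\star_\hbar g=\sum_{K}\frac{\hbar^{|K|}}{K!}\frac{\partial^{|K|}f}{\partial\overline{z}^K}\frac{\partial^{|K|}g}{\partial z^K}$ ($K!=\prod K_i!$), involution pointwise complex conjugation. $\mathcal{J}=\sum_{j=0}^nz_j\overline{z_j}$. Falling factorial: $(x)_{\downarrow,k}=\prod_{j=0}^{k-1}(x-j)$. *)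

(* Defs.v *)
From HB Require Import structures.
From mathcomp Require Import all_boot all_order all_algebra.
From mathcomp Require Import reals.
From mathcomp.real_closed Require Import complex.
From mathcomp Require Import mpoly.
Set Implicit Arguments. Unset Strict Implicit. Unset Printing Implicit Defensive.
Import Order.TTheory GRing.Theory Num.Theory.
Local Open Scope ring_scope.
Local Open Scope complex_scope.

(* Polynomials in z_0..z_n, zbar_0..zbar_n over C = R[i] (R the reals):
   formal polynomials in 2(1+n) variables; the variable (lshift _ j) is z_j and
   (rshift _ j) is zbar_j.  Polynomial functions in z, zbar on C^{1+n} are in
   bijection with such formal polynomials. *)
Section Wick.
Variables (R : realType) (n : nat).
Local Notation C := (R[i]).
Local Notation N := (n.+1 + n.+1)%N.
Local Notation P := ({mpoly C[N]}).

Definition zv (j : 'I_n.+1) : 'I_N := lshift n.+1 j.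
Definition zbv (j : 'I_n.+1) : 'I_N := rshift n.+1 j.

Definition zdeg (m : 'X_{1..N}) : nat := (\sum_(j < n.+1) m (zv j))%N.
Definition zbdeg (m : 'X_{1..N}) : nat := (\sum_(j < n.+1) m (zbv j))%N.

Definition inPkl (k l : nat) (p : P) : Prop :=
  forall m, m \in msupp p -> zdeg m = k /\ zbdeg m = l.

Definition inPbal (p : P) : Prop :=
  forall m, m \in msupp p -> zdeg m = zbdeg m.

Definition dz (K : 'I_n.+1 -> nat) (p : P) : P :=
  foldr (fun j => iter (K j) (mderiv (zv j))) p (enum 'I_n.+1).
Definition dzb (K : 'I_n.+1 -> nat) (p : P) : P :=
  foldr (fun j => iter (K j) (mderiv (zbv j))) p (enum 'I_n.+1).

Definition mabs (K : 'I_n.+1 -> nat) : nat := (\sum_j K j)%N.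
Definition mfact (K : 'I_n.+1 -> nat) : nat := (\prod_j (K j)`!)%N.

(* Wick star product.  The sum over K in N_0^{1+n} is finite: if some K_j >=
   msize f then dzb K f = 0, so we sum over K with all K_j < msize f. *)
Definition wick (hbar : R) (f g : P) : P :=
  \sum_(K : {ffun 'I_n.+1 -> 'I_(msize f)})
     ((hbar ^+ mabs (fun j => K j) / (mfact (fun j => K j))%:R)%:C)
       *: (dzb (fun j => K j) f * dz (fun j => K j) g).

(* pointwise complex conjugation: conjugate coefficients and swap z <-> zbar *)
Definition swapv (i : 'I_N) : 'I_N :=
  match split i with inl j => zbv j | inr j => zv j end.
Definition pconj (p : P) : P :=
  map_mpoly (@conjc R) p \mPo [tuple 'X_(swapv i) | i < N].

Definition Jpoly : P := \sum_(j < n.+1) 'X_(zv j) * 'X_(zbv j).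

Inductive in_star_ideal (hbar : R) (a : P) : P -> Prop :=
  | sid_gen : in_star_ideal hbar a a
  | sid_zero : in_star_ideal hbar a 0
  | sid_add p q : in_star_ideal hbar a p -> in_star_ideal hbar a q ->
      in_star_ideal hbar a (p + q)
  | sid_scale (c : C) p : in_star_ideal hbar a p -> in_star_ideal hbar a (c *: p)
  | sid_mull b p : inPbal b -> in_star_ideal hbar a p ->
      in_star_ideal hbar a (wick hbar b p)
  | sid_mulr b p : inPbal b -> in_star_ideal hbar a p ->
      in_star_ideal hbar a (wick hbar p b)
  | sid_conj p : in_star_ideal hbar a p -> in_star_ideal hbar a (pconj p).

End Wick.

Definition falling (R : pzRingType) (x : R) (k : nat) : R :=
  \prod_(j < k) (x - j%:R).

(* Main.v *)
Require Import Defs.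
From HB Require Import structures.
From mathcomp Require Import all_boot all_order all_algebra.
From mathcomp Require Import reals.
From mathcomp.real_closed Require Import complex.
From mathcomp Require Import mpoly.
From mathcomp Require Import ring.
Import Order.TTheory GRing.Theory Num.Theory.
Local Open Scope ring_scope.
Local Open Scope complex_scope.
Set Implicit Arguments. Unset Strict Implicit. Unset Printing Implicit Defensive.
Section S.
Variables (R : comRingType) (N : nat) (m0 : nat).
Local Notation P := ({mpoly R[N]}).
Variable (v : 'I_m0 -> 'I_N) (K : 'I_m0 -> nat).
Definition FI (s : seq 'I_m0) (p : P) : P :=
  foldr (fun j => iter (K j) (mderiv (v j))) p s.

Lemma iter_add (D : {additive P -> P}) k x y : iter k D (x - y) = iter k D x - iter k D y.
Proof. elim: k => [|k IH] //=. by rewrite IH raddfB. Qed.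

Lemma FI_B s p q : FI s (p - q) = FI s p - FI s q.
Proof. elim: s => [|i s IH] //=. by rewrite IH; apply: (iter_add (mderiv (v i))). Qed.
Lemma FI_0 s : FI s 0 = 0.
Proof. by have := FI_B s 0 0; rewrite !subrr. Qed.
Lemma FI_D s p q : FI s (p + q) = FI s p + FI s q.
Proof.
have FN r : FI s (- r) = - FI s r by rewrite -sub0r FI_B FI_0 sub0r.
by have := FI_B s p (- q); rewrite opprK FN opprK.
Qed.
Lemma FI_sum s I r (F : I -> P) : FI s (\sum_(i <- r) F i) = \sum_(i <- r) FI s (F i).
Proof. elim: r => [|a r IH]; rewrite ?big_nil ?FI_0 // !big_cons FI_D IH //. Qed.

Lemma iter_kill (D : {additive P -> P}) k q : D q = 0 -> iter k D q = if k == 0%N then q else 0.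
Proof. move=> Dq; elim: k => [|k IH] //=. rewrite IH; case: k {IH} => //= *; exact: raddf0. Qed.

Lemma FI_zero s p : all (fun i => K i == 0%N) s -> FI s p = p.
Proof. elim: s => [|i s IH] //= /andP[/eqP-> H]; by rewrite IH. Qed.

Lemma FI_const s q : (forall i, mderiv (v i) q = 0) ->
  FI s q = if all (fun i => K i == 0%N) s then q else 0.
Proof.
move=> Dq; elim: s => [|i s IH] //=; rewrite IH.
case: (all (fun i => K i == 0%N) s); rewrite ?andbT ?andbF.
  by rewrite iter_kill //; apply: Dq.
by rewrite iter_kill ?raddf0 //; case: (K i == 0%N).
Qed.

Lemma FI_delta s j p : uniq s -> j \in s -> all (fun i => K i == (i == j)) s ->
  FI s p = mderiv (v j) p.
Proof.
elim: s => [|i s IH] //= /andP[ni us]; rewrite inE => js /andP[/eqP Ki H].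
have [eij|nij] := eqVneq i j.
  subst j; rewrite FI_zero; first by rewrite Ki eqxx.
  apply/allP => x xs; move/allP: H => /(_ x xs)/eqP->.
  by rewrite (_ : (x == i) = false) //; apply/eqP => exi; move: ni; rewrite -exi xs.
rewrite Ki (negbTE nij) /= IH //; by move: js; rewrite eq_sym (negbTE nij).
Qed.

Lemma FI_two s j x q : uniq s ->
  (forall i, mderiv (v i) x = if i == j then q else 0) ->
  (forall i, mderiv (v i) q = 0) ->
  FI s x = if all (fun i => K i == 0%N) s then x
           else if (j \in s) && all (fun i => K i == (i == j)) s then q else 0.
Proof.
move=> + Dx Dq; elim: s => [|i s IH] //= /andP[ni us]; rewrite IH // inE.
have ik0 k : iter k (mderiv (v i)) 0 = 0.
  by elim: k => //= k ->; exact: raddf0.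
have ikq k : iter k (mderiv (v i)) q = if k == 0%N then q else 0.
  by apply: iter_kill; exact: Dq.
have itx k : iter k (mderiv (v i)) x =
   if k == 0%N then x else if (k == 1%N) && (i == j) then q else 0.
  case: k => [|k] //; rewrite iterSr Dx.
  case: (i == j); last by rewrite ik0 andbF.
  by rewrite ikq; case: k.
case A: (all _ s).
  rewrite itx; case: eqP => Ki //=.
  case: eqP => K1 /=; last first.
    have -> : (K i == (i == j)) = false by case: (i == j); apply/eqP.
    by rewrite /= andbF.
  case: eqP => [eij|nij]/=.
    rewrite -eij K1 eqxx /=; case: ifP => // /negP []; apply/allP => y ys.
    move/allP: A => /(_ y ys)/eqP->.
    by rewrite (_ : (y == i) = false) //; apply/eqP => eyi; move: ni; rewrite -eyi ys.
    by rewrite K1 /= andbF.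
case B: ((j \in s) && _).
  rewrite ikq; move/andP: B => [js B]; rewrite B js orbT andbT.
  have nij : (i == j) = false by apply/eqP => eij; move: ni; rewrite eij js.
  by rewrite nij; case: eqP.
rewrite ik0 andbF /=.
case: ifP => //; case: eqP => [eji|nji]/=; last first.
  by move=> /andP[js /andP[_ H]]; move: B; rewrite js H.
move=> /andP[_ H]; move: A; rewrite (_ : all _ s = true) //.
apply/allP => y ys; move/allP: H => /(_ y ys); rewrite (_ : (y == j) = false) //.
by apply/eqP => eyj; move: ni; rewrite -eji -eyj ys.
Qed.
End S.

Section W.
Variables (R : realType) (n : nat).
Local Notation C := (R[i]).
Local Notation N := (n.+1 + n.+1)%N.
Local Notation P := ({mpoly C[N]}).

Lemma zv_zbv i j : (zv i == zbv j :> 'I_N) = false.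
Proof. apply/eqP => /(congr1 val) /=; case: i => i /= lti e; move: lti; rewrite e; by rewrite ltnNge leq_addr. Qed.

Lemma zv_inj : injective (@zv n). Proof. exact: lshift_inj. Qed.
Lemma zbv_inj : injective (@zbv n). Proof. exact: rshift_inj. Qed.

Lemma mderivXv (i k : 'I_N) : mderiv i ('X_k : P) = (k == i)%:R.
Proof.
rewrite mderivX mnm1E; case: eqP => [->|_]; last by rewrite scale0r.
by rewrite (_ : (U_(i) - U_(i))%MM = 0%MM) ?mpolyX0 ?scale1r //; apply/mnmP => t; rewrite mnmBE subnn mnm0E.
Qed.

Definition Z0 (K : 'I_n.+1 -> nat) := all (fun i => K i == 0%N) (enum 'I_n.+1).
Definition DL (j : 'I_n.+1) (K : 'I_n.+1 -> nat) := all (fun i => K i == (i == j)) (enum 'I_n.+1).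

Lemma dzbE K (p : P) : dzb K p = FI (@zbv n) K (enum 'I_n.+1) p. Proof. by []. Qed.
Lemma dzE K (p : P) : dz K p = FI (@zv n) K (enum 'I_n.+1) p. Proof. by []. Qed.

Lemma dzb_a (mu : C) K : dzb K (Jpoly R n - mu%:MP) =
  if Z0 K then Jpoly R n - mu%:MP else \sum_j (if DL j K then ('X_(zv j) : P) else 0).
Proof.
rewrite dzbE FI_B (FI_const _ _ _ (q := mu%:MP)); last by move=> i; exact: mderivC.
rewrite /Jpoly FI_sum.
under eq_bigr => j _.
  rewrite (FI_two _ _ _ (j := j) (q := 'X_(zv j))); first over.
  - exact: enum_uniq.
  - move=> i; rewrite mderivM !mderivXv zv_zbv mul0r add0r.
    by rewrite (inj_eq zbv_inj) eq_sym; case: eqP; rewrite ?mulr1 ?mulr0.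
  - by move=> i; rewrite mderivXv zv_zbv.
rewrite -/(Z0 K); case: (Z0 K); first by [].
by rewrite subr0; apply: eq_bigr => j _; rewrite mem_enum.
Qed.

Lemma dz_Z0 K (p : P) : Z0 K -> dz K p = p.
Proof. by move=> h; rewrite dzE FI_zero. Qed.

Lemma dz_DL K j (p : P) : DL j K -> dz K p = mderiv (zv j) p.
Proof. by move=> h; rewrite dzE (FI_delta _ _ (j := j)) ?enum_uniq ?mem_enum. Qed.

Lemma Z0P K : Z0 K -> forall i, K i = 0%N.
Proof. by move=> /allP h i; apply/eqP/h; rewrite mem_enum. Qed.
Lemma DLP j K : DL j K -> forall i, K i = (i == j).
Proof. by move=> /allP h i; apply/eqP/h; rewrite mem_enum. Qed.

Lemma coef_Z0 (h : R) K : Z0 K -> h ^+ mabs K / (mfact K)%:R = 1.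
Proof.
move/Z0P => h0; rewrite /mabs /mfact big1 ?expr0; last by move=> i _; rewrite h0.
by rewrite big1 ?divr1 // => i _; rewrite h0.
Qed.

Lemma coef_DL (h : R) j K : DL j K -> h ^+ mabs K / (mfact K)%:R = h.
Proof.
move/DLP => h0.
have -> : mfact K = 1%N.
  by rewrite /mfact big1 // => i _; rewrite h0; case: (i == j).
have -> : mabs K = 1%N.
  rewrite /mabs (bigD1 j) //= big1 ?h0 ?eqxx ?addn0 // => i /negbTE.
  by rewrite h0 => ->.
by rewrite divr1 expr1.
Qed.

Lemma dJ i : mderiv (zbv i) (Jpoly R n) = 'X_(zv i).
Proof.
rewrite /Jpoly raddf_sum (bigD1 i) //= big1 ?addr0.
  by rewrite mderivM !mderivXv zv_zbv eqxx mul0r add0r mulr1.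
move=> j nji; rewrite mderivM !mderivXv zv_zbv (inj_eq zbv_inj) (negbTE nji).
by rewrite mul0r mulr0 addr0.
Qed.

Lemma msize_a (mu : C) : (1 < msize (Jpoly R n - mu%:MP))%N.
Proof.
rewrite ltnNge; apply/negP => /msize1_polyC E.
have := congr1 (mderiv (zbv ord0)) E; rewrite mderivC mderivB mderivC subr0 dJ.
move/(congr1 (mcoeff U_(zv (@ord0 n)))); rewrite mcoeffX mcoeff0 eqxx => /eqP.
by rewrite oner_eq0.
Qed.

Lemma term_eq (hb mu : R) (g : P) K :
 let a := Jpoly R n - (mu%:C)%:MP in
 ((hb ^+ mabs K / (mfact K)%:R)%:C) *: (dzb K a * dz K g) =
 (if Z0 K then a * g else 0) +
   \sum_j (if DL j K then hb%:C *: ('X_(zv j) * mderiv (zv j) g) else 0).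
Proof.
move=> a; rewrite dzb_a; case Z: (Z0 K).
  rewrite big1 ?addr0; last first.
    move=> j _; case D: (DL j K) => //.
    by have := DLP D j; rewrite Z0P // eqxx.
  by rewrite coef_Z0 // dz_Z0 // scale1r.
rewrite add0r mulr_suml scaler_sumr; apply: eq_bigr => j _.
case D: (DL j K); last by rewrite mul0r scaler0.
by rewrite (coef_DL _ D) (dz_DL _ D).
Qed.

Lemma sum_if1 (I : finType) (Q : pred I) (i0 : I) (A : P) :
  Q =1 pred1 i0 -> \sum_(K : I) (if Q K then A else 0) = A.
Proof. by move=> h; rewrite -big_mkcond (big_pred1 i0). Qed.

Lemma wick_a (hb mu : R) (g : P) :
  wick hb (Jpoly R n - (mu%:C)%:MP) g =
  (Jpoly R n - (mu%:C)%:MP) * g + hb%:C *: \sum_j ('X_(zv j) * mderiv (zv j) g).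
Proof.
rewrite /wick.
have h1 := msize_a (mu%:C).
have h0 : (0 < msize (Jpoly R n - (mu%:C)%:MP))%N by apply: ltnW.
under eq_bigr => K _ do rewrite term_eq.
rewrite big_split /= exchange_big /= scaler_sumr; congr (_ + _).
  apply: (sum_if1 (i0 := [ffun _ => Ordinal h0])) => K /=.
  apply/idP/eqP.
    by move/Z0P => h; apply/ffunP => i; apply/val_inj; rewrite ffunE /= h.
  by move=> ->; apply/allP => i _; rewrite ffunE.
apply: eq_bigr => j _.
apply: (sum_if1 (i0 := [ffun i => if i == j then Ordinal h1 else Ordinal h0])) => K /=.
apply/idP/eqP.
  move/DLP => h; apply/ffunP => i; apply/val_inj; rewrite ffunE /=; move: (h i) => /= ->.
  by case: (i == j).
by move=> ->; apply/allP => i _; rewrite ffunE; case: (i == j).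
Qed.

Lemma euler (g : P) l : (forall m, m \in msupp g -> zdeg m = l) ->
  \sum_j ('X_(zv j) * mderiv (zv j) g) = l%:R *: g.
Proof.
move=> hg; have E := mpolyE g.
transitivity (\sum_(m <- msupp g) g@_m *: (\sum_j 'X_(zv j) * mderiv (zv j) ('X_[m] : P))).
  rewrite {1}E; under eq_bigr => j _ do rewrite raddf_sum mulr_sumr.
  rewrite exchange_big /=; apply: eq_bigr => m _; rewrite scaler_sumr.
  by apply: eq_bigr => j _; rewrite linearZ /= -scalerAr.
rewrite {3}E scaler_sumr big_seq [RHS]big_seq; apply: eq_bigr => m ms.
rewrite scalerA mulrC -scalerA; congr (_ *: _).
rewrite -(hg m ms) /zdeg natr_sum scaler_suml; apply: eq_bigr => j _.
rewrite mderivX -scalerAr.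
case: (posnP (m (zv j))) => [->|mpos]; first by rewrite !scale0r.
congr (_ *: _).
rewrite -mpolyXD (_ : (U_(zv j) + (m - U_(zv j)))%MM = m) //.
rewrite addmC submK //; apply/mnm_lepP => i; rewrite mnm1E.
by case: eqP => [<-|] //.
Qed.

Lemma zdegD (m1 m2 : 'X_{1..N}) : zdeg (m1 + m2)%MM = (zdeg m1 + zdeg m2)%N.
Proof. by rewrite /zdeg -big_split; apply: eq_bigr => i _; rewrite mnmDE. Qed.
Lemma zbdegD (m1 m2 : 'X_{1..N}) : zbdeg (m1 + m2)%MM = (zbdeg m1 + zbdeg m2)%N.
Proof. by rewrite /zbdeg -big_split; apply: eq_bigr => i _; rewrite mnmDE. Qed.

Lemma J_supp : inPkl 1 1 (Jpoly R n).
Proof.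
move=> m /msupp_sum_le /flattenP [s /mapP [j _ ->]].
rewrite -mpolyXD msuppX inE => /eqP ->.
rewrite zdegD zbdegD /zdeg /zbdeg.
have S1 (f : 'I_n.+1 -> 'I_N) (finj : injective f) :
    (\sum_(i < n.+1) U_(f j)%MM (f i))%N = 1%N.
  rewrite (bigD1 j) //= big1 ?mnm1E ?eqxx // => i nij.
  by rewrite mnm1E (inj_eq finj) eq_sym (negbTE nij).
have S0 (f g : 'I_n.+1 -> 'I_N) (fg : forall a b, (f a == g b) = false) :
    (\sum_(i < n.+1) U_(f j)%MM (g i))%N = 0%N.
  by rewrite big1 // => i _; rewrite mnm1E fg.
rewrite (S1 (@zv n)) ?(S0 (@zbv n) (@zv n)) ?(S0 (@zv n) (@zbv n)) ?(S1 (@zbv n)) //.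
- exact: zbv_inj.
- by move=> a b; rewrite zv_zbv.
- by move=> a b; rewrite eq_sym zv_zbv.
- exact: zv_inj.
Qed.

Lemma Jg_supp l (g : P) : inPkl l l g -> inPkl l.+1 l.+1 (Jpoly R n * g).
Proof.
move=> hg m /msuppM_le /allpairsP [[m1 m2] /= [m1J m2g ->]].
have [a1 b1] := J_supp m1J; have [a2 b2] := hg _ m2g.
by rewrite zdegD zbdegD a1 b1 a2 b2.
Qed.

Lemma base (hb mu : R) l (g : P) : inPkl l l g ->
  in_star_ideal hb (Jpoly R n - (mu%:C)%:MP)
    (Jpoly R n * g - ((mu - hb * l%:R)%:C) *: g).
Proof.
move=> hg.
have bal : inPbal g by move=> m /hg [-> ->].
have := sid_mulr bal (sid_gen hb (Jpoly R n - (mu%:C)%:MP)).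
rewrite wick_a (euler (l := l)); last by move=> m /hg [].
suff -> : Jpoly R n * g - (mu - hb * l%:R)%:C *: g =
  (Jpoly R n - (mu%:C)%:MP) * g + hb%:C *: (l%:R *: g) by [].
rewrite -!mul_mpolyC !rmorphB !rmorphM /= !rmorph_nat.
ring.
Qed.
End W.

Lemma alg (T : comRingType) (J g c1 d : T) k :
  J ^+ k.+1 * g - (c1 * d) * g = J ^+ k * (J * g) - c1 * (J * g) + c1 * (J * g - d * g).
Proof. rewrite exprS; ring. Qed.

Theorem lemma4p9 (R : realType) (n : nat) (hbar mu : R) (k l : nat)
  (g : {mpoly R[i][n.+1 + n.+1]}) :
  (0 < n)%N -> 0 < hbar -> inPkl l l g ->
  in_star_ideal hbar (Jpoly R n - (mu%:C)%:MP)
    (Jpoly R n ^+ k * g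
       - ((hbar ^+ k * falling (mu / hbar - l%:R) k)%:C) *: g).
Proof.
move=> _ hpos; have hb0 : hbar != 0 by rewrite gt_eqF.
elim: k l g => [|k IH] l g hg.
  rewrite expr0 mul1r /falling big_ord0 mulr1 rmorph1 scale1r subrr.
  exact: sid_zero.
have key : hbar ^+ k.+1 * falling (mu / hbar - l%:R) k.+1 =
   hbar ^+ k * falling (mu / hbar - (l.+1)%:R) k * (mu - hbar * l%:R).
  rewrite /falling big_ord_recl.
  have -> : \prod_(i < k) (mu / hbar - l%:R - (lift ord0 i)%:R) =
            \prod_(i < k) (mu / hbar - (l.+1)%:R - i%:R).
    apply: eq_bigr => i _; rewrite lift0 -[i.+1]addn1 -[l.+1]addn1 !natrD; ring.
  set F := \prod_(i < k) _.
  set x := mu / hbar.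
  have E : mu = x * hbar by rewrite /x divfK.
  rewrite [in RHS]E exprS /= subr0.
  ring.
have H1 := IH l.+1 (Jpoly R n * g) (Jg_supp hg).
have H2 := base hbar mu hg.
have := sid_add H1 (sid_scale ((hbar ^+ k * falling (mu / hbar - (l.+1)%:R) k)%:C) H2).
rewrite key.
set c1 := (hbar ^+ k * falling (mu / hbar - (l.+1)%:R) k).
set d := (mu - hbar * l%:R).
suff -> : Jpoly R n ^+ k.+1 * g - (c1 * d)%:C *: g =
  Jpoly R n ^+ k * (Jpoly R n * g) - c1%:C *: (Jpoly R n * g) +
  c1%:C *: (Jpoly R n * g - d%:C *: g) by [].
rewrite -!mul_mpolyC.
have cm : ((c1 * d)%:C)%:MP = (c1%:C)%:MP * (d%:C)%:MP :> {mpoly R[i][n.+1 + n.+1]}.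
  by rewrite -!rmorphM.
rewrite cm; exact: alg.
Qed.
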